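(* Let $G=(V,E)$ be a finite simple connected graph of order $n\geq 2$, and let $S(G)$ be its splitting graph. Then $\beta_0(S(G)) = n+\beta^*_0(G)$.
   Context: For a finite simple graph $G=(V,E)$, the splitting graph $S(G)$ is obtained from $G$ by adding, for each vertex $v\in V$, a new vertex $v'$, and joining $v'$ to a vertex $u\in V$ if and only if $uv\in E$ (the new vertices are pairwise non-adjacent; the edges of $G$ are kept). $\beta_0(H)$ denotes the independence number of a graph $H$ (maximum size of an independent set). For a graph $G$ of order $n\geq 2$, $\beta_0^*(G):=\max\{|S|-|N(S)| : S \text{ is an independent set of } G\}$, where $N(S)$ is the set of vertices of $G$ adjacent to some vertex of $S$ (the empty set counts as an independent set). *)

(* Defs.v *)
From mathcomp Require Import all_boot all_order all_algebra.
Set Implicit Arguments. Unset Strict Implicit. Unset Printing Implicit Defensive.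
Import Order.TTheory GRing.Theory Num.Theory.

Section Graphs.
Variable T : finType.

Definition simple_graph (e : rel T) : Prop := symmetric e /\ irreflexive e.

Definition connected_graph (e : rel T) : Prop := forall x y : T, connect e x y.

Definition independent (e : rel T) (S : {set T}) : bool :=
  [forall x in S, forall y in S, ~~ e x y].

Definition indep_number (e : rel T) : nat :=
  \max_(S : {set T} | independent e S) #|S|.

Definition nbhd (e : rel T) (S : {set T}) : {set T} :=
  [set u | [exists v in S, e v u]].

(* beta_0^*(G) = max { |S| - |N(S)| : S independent }, integer valued.
   The empty set is independent and gives 0, so using 0 as the neutral
   element of the max does not change the value. *)
Definition beta0_star (e : rel T) : int :=
  \big[Num.max/0%R]_(S : {set T} | independent e S) (#|S|%:Z - #|nbhd e S|%:Z)%R.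
End Graphs.

(* Splitting graph S(G): vertices inl v (original) and inr v (copy v').
   Edges of G kept; v' ~ u iff u v is an edge of G; copies pairwise non-adjacent. *)
Definition splitting_rel (T : finType) (e : rel T) : rel (T + T) :=
  fun a b => match a, b with
             | inl u, inl v => e u v
             | inl u, inr v => e u v
             | inr u, inl v => e u v
             | inr _, inr _ => false
             end.

(* Main.v *)
Require Import Defs.
From mathcomp Require Import all_boot all_order all_algebra.
From mathcomp Require Import zify.
Import Order.TTheory GRing.Theory Num.Theory.

Lemma card_split (T : finType) (I : {set T + T}) :
  #|I| = #|[set x | inl x \in I]| + #|[set x | inr x \in I]|.
Proof.
rewrite -!sum1_card big_sumType; congr (_ + _); apply: eq_bigl => x; by rewrite inE.
Qed.

Lemma le_beta (T : finType) (e : rel T) (S : {set T}) :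
  independent e S -> ((#|S|%:Z - #|nbhd e S|%:Z) <= beta0_star e)%R.
Proof.
move=> hS; rewrite /beta0_star (bigD1 S) //=.
by rewrite le_max lexx.
Qed.

Theorem theorem1 (T : finType) (e : rel T) :
  simple_graph e -> connected_graph e -> 2 <= #|T| ->
  Posz (indep_number (splitting_rel e)) = (Posz #|T| + beta0_star e)%R.
Proof.
move=> [esym eirr] _ _.
have key2 : forall A : {set T}, independent e A ->
    (#|T| + #|A| - #|nbhd e A| <= indep_number (splitting_rel e))%N.
  move=> A hA.
  pose I := [set x : T + T | match x with inl a => a \in A
                             | inr b => b \notin nbhd e A end].
  have hI : independent (splitting_rel e) I.
    apply/forall_inP => x xI; apply/forall_inP => y yI.
    move: xI yI; rewrite !inE.
    case: x => [a|a]; case: y => [b|b] //= xI yI.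
    - by move/forall_inP: hA => /(_ a xI) /forall_inP /(_ b yI).
    - apply/negP => eab; move: yI; rewrite inE; case/negP.
      by apply/exists_inP; exists a.
    - apply/negP => eab; move: xI; rewrite inE; case/negP.
      by apply/exists_inP; exists b => //; rewrite esym.
  have cI : #|I| = #|A| + #|~: nbhd e A|.
    rewrite card_split; congr (_ + _); apply: eq_card => x; by rewrite !inE.
  have := cardsC (nbhd e A).
  have := @leq_bigmax_cond _ (fun S : {set T + T} => independent (splitting_rel e) S) (fun S : {set T + T} => #|S|) I hI.
  rewrite /indep_number cI.
  have := subset_leq_card (subsetT (nbhd e A)); rewrite cardsT.
  move=> h1 h2 h3; apply: leq_trans h2; lia.
have nb0 : nbhd e set0 = set0.
  apply/setP => x; rewrite in_set0; apply/negbTE; rewrite inE.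
  by apply/exists_inP => -[v]; rewrite inE.
have n_le : (#|T| <= indep_number (splitting_rel e))%N.
  have h0 : independent e set0 by apply/forall_inP => x; rewrite inE.
  have := key2 _ h0; rewrite cards0 nb0 cards0; lia.
apply/eqP; rewrite eq_le; apply/andP; split.
- rewrite /indep_number.
  elim/big_ind: _ => //.
  + have h0 : independent e set0 by apply/forall_inP => x; rewrite inE.
    have := le_beta _ _ _ h0.
    rewrite cards0 nb0 cards0 => h; lia.
  + move=> a b ha hb; rewrite /maxn; by case: ifP.
  move=> I hI.
  pose A := [set x | inl x \in I].
  pose B := [set x | inr x \in I].
  have hA : independent e A.
    apply/forall_inP => x; rewrite inE => xI; apply/forall_inP => y; rewrite inE => yI.
    by move/forall_inP: hI => /(_ _ xI) /forall_inP /(_ _ yI).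
  have hB : B \subset ~: nbhd e A.
    apply/subsetP => b; rewrite !inE => bI; apply/negP => /exists_inP [v].
    rewrite inE => vI evb.
    by move/forall_inP: hI => /(_ _ vI) /forall_inP /(_ _ bI) /=; rewrite evb.
  have := subset_leq_card hB.
  have := cardsC (nbhd e A).
  have := le_beta _ _ _ hA.
  rewrite (card_split _ I) -/A -/B.
  lia.
- rewrite -lerBrDl.
  rewrite /beta0_star.
  elim/big_ind: _ => //.
  + lia.
  + move=> a b ha hb; by rewrite ge_max ha hb.
  move=> A hA; have := key2 A hA; lia.
Qed.
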